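(* The eventual equality relation $E_0(\mathbb{N})$ on the Baire space $\mathbb{N}^\mathbb{N}$ is $\Pi^0_1$-graphable with diameter $2$.
   Context: $xE_0(\mathbb{N})y$ iff there is $m$ with $x(n)=y(n)$ for all $n\ge m$ ($x,y\in\mathbb{N}^\mathbb{N}$). $E$ is $\Gamma$-graphable with diameter $k$ if there is a simple undirected graph $G$ in $\Gamma$ whose connectedness relation equals $E$ and $k$ is the least integer such that any two $G$-connected points are joined by a path of length at most $k$. *)

(* Defs.v *)
From Stdlib Require Import Arith.

Definition baire := nat -> nat.

Definition E0 (x y : baire) : Prop :=
  exists m : nat, forall n : nat, m <= n -> x n = y n.

Definition brel := baire -> baire -> Prop.

Definition simple_graph (G : brel) : Prop :=
  (forall x y, G x y -> G y x) /\ (forall x, ~ G x x).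

(* Pi^0_1 = closed in the product topology of N^N x N^N, whose basic open
   sets are the cylinders N_s x N_t determined by finite initial segments.
   The complement of G is open: every non-edge has a basic neighbourhood
   of non-edges. *)
Definition Pi01 (G : brel) : Prop :=
  forall x y, ~ G x y ->
    exists N : nat, forall x' y' : baire,
      (forall i, i < N -> x' i = x i /\ y' i = y i) -> ~ G x' y'.

Inductive walk (G : brel) : nat -> baire -> baire -> Prop :=
| walk_nil : forall x, walk G 0 x x
| walk_cons : forall k x y z, G x y -> walk G k y z -> walk G (S k) x z.

Definition connected (G : brel) (x y : baire) : Prop :=
  exists k, walk G k x y.

Definition diam_bound (G : brel) (k : nat) : Prop :=
  forall x y, connected G x y -> exists j, j <= k /\ walk G j x y.

Definition has_diameter (G : brel) (k : nat) : Prop :=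
  diam_bound G k /\ (forall k', k' < k -> ~ diam_bound G k').

Definition Pi01_graphable_diam (E : brel) (k : nat) : Prop :=
  exists G : brel, simple_graph G /\ Pi01 G /\
    (forall x y, connected G x y <-> E x y) /\ has_diameter G k.

(* Main.v *)
Require Import Defs.
From Stdlib Require Import Arith Lia Classical.

Definition Gr (x y : baire) : Prop :=
  x 0 <> y 0 /\ forall n, Nat.max (x 0) (y 0) < n -> x n = y n.

Lemma Gr_E0 x y : Gr x y -> E0 x y.
Proof. intros [_ H]. exists (S (Nat.max (x 0) (y 0))). intros n Hn. apply H. lia. Qed.

Lemma E0_trans x y z : E0 x y -> E0 y z -> E0 x z.
Proof.
  intros [m1 H1] [m2 H2]. exists (m1 + m2). intros n Hn.
  rewrite H1 by lia. apply H2. lia.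
Qed.

Lemma walk_E0 k x y : walk Gr k x y -> E0 x y.
Proof.
  induction 1.
  - exists 0. auto.
  - eapply E0_trans; [apply Gr_E0; eauto | auto].
Qed.

Lemma E0_walk2 x y : E0 x y -> walk Gr 2 x y.
Proof.
  intros [m Hm].
  set (K := S (m + x 0 + y 0)).
  set (z := fun n => match n with 0 => K | S k => x (S k) end).
  apply walk_cons with z.
  - split.
    + simpl. unfold K. lia.
    + intros [|n] Hn; [lia|]. reflexivity.
  - apply walk_cons with y; [|constructor].
    split.
    + simpl. unfold K. lia.
    + intros [|n] Hn; [exfalso; revert Hn; generalize (Nat.max (z 0) (y 0)); intros; lia|]; simpl.
      apply Hm. unfold z, K in Hn. lia.
Qed.

Theorem proposition3p8 : Pi01_graphable_diam E0 2.
Proof.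
  exists Gr. split; [|split; [|split]].
  - split.
    + intros x y [H1 H2]. split; [auto|]. intros n Hn. symmetry. apply H2. lia.
    + intros x [H _]. apply H. reflexivity.
  - intros x y HG.
    destruct (Nat.eq_dec (x 0) (y 0)) as [E|E].
    + exists 1. intros x' y' Hi [H _]. apply H.
      destruct (Hi 0) as [A B]; [lia|]. congruence.
    + assert (exists n, ~ (Nat.max (x 0) (y 0) < n -> x n = y n)) as [n Hn].
      { apply not_all_ex_not. intro Hall. apply HG. split; auto. }
      exists (S n). intros x' y' Hi [_ H].
      destruct (Hi 0) as [A B]; [lia|].
      destruct (Hi n) as [C D]; [lia|].
      apply Hn. intro Hlt. rewrite <- C, <- D. apply H. rewrite A, B. exact Hlt.
  - intros x y. split.
    + intros [k Hk]. eapply walk_E0; eauto.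
    + intros H. exists 2. apply E0_walk2. auto.
  - split.
    + intros x y [k Hk]. exists 2. split; auto. apply E0_walk2. eapply walk_E0; eauto.
    + intros k' Hk' Hb.
      set (x := fun _ : nat => 0).
      set (y := fun n => match n with 1 => 1 | _ => 0 end).
      assert (Hxy : E0 x y). { exists 2. intros [|[|n]] Hn; try lia; reflexivity. }
      destruct (Hb x y) as [j [Hj Hw]].
      { exists 2. apply E0_walk2. auto. }
      inversion Hw; subst.
      * match goal with Heq : x = y |- _ => assert (x 1 = y 1) by (rewrite Heq; reflexivity) end. discriminate.
      * inversion H0; subst.
        -- destruct H as [H _]. apply H. reflexivity.
        -- lia.
Qed.
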